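(* Assume that $n = 2$. Then for any $k \ge 0$ (and any $\ell \in \mathbb{N}$), the following formula holds in $V_2$: \begin{equation*} (r + k,\ell) = \sum_{s=1}^r(-1)^{s-1} \begin{bmatrix} s + k - 1 \\ s -1 \end{bmatrix} \begin{bmatrix} r + k \\ r - s \end{bmatrix}(r - s, \ell + s + k). \end{equation*}
   Context: Let $q$ be an indeterminate, $[n] = \frac{q^n - q^{-n}}{q - q^{-1}}$ for $n \in \mathbb{Z}$, $[m]^! = [1][2]\cdots[m]$, and for $n \in \mathbb{Z}$, $m \in \mathbb{N}$, $\begin{bmatrix} n \\ m\end{bmatrix} = \frac{[n][n-1]\cdots[n-m+1]}{[m]^!}$ for $m \ge 1$, $\begin{bmatrix} n \\ 0\end{bmatrix} = 1$. Fix an integer $r \ge 2$. Let $V_n$ be the vector space over $\mathbb{Q}(q)$ spanned by symbols $a = (a_1, \dots, a_n) \in \mathbb{N}^n$ subject to the following relations: for $1 \le i \le n-1$, if $a_i \ge r$ then $\sum_{0 \le j \le r}(-1)^j\begin{bmatrix} r \\ j\end{bmatrix} a(j) = 0$, where $a(j) = (a_1, \dots, a_{i-1}, a_i - j, a_{i+1} + j, a_{i+2}, \dots, a_n)$ (so $a(0) = a$). In particular for $n = 2$ the relation reads $\sum_{j=0}^r (-1)^j\begin{bmatrix} r \\ j\end{bmatrix}(a_1 - j, a_2 + j) = 0$ whenever $a_1 \ge r$. *)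

(* Defs.v *)
From HB Require Import structures.
From mathcomp Require Import all_boot all_order all_algebra.
Set Implicit Arguments. Unset Strict Implicit. Unset Printing Implicit Defensive.
Import Order.TTheory GRing.Theory Num.Theory.
Local Open Scope ring_scope.

Definition Qq : fieldType := {fraction {poly rat}}.
Definition q : Qq := tofrac ('X : {poly rat}).

Definition qint (n : int) : Qq := (q ^ n - q ^ (- n)) / (q - q^-1).

Definition qbinom (n : int) (m : nat) : Qq :=
  (\prod_(i < m) qint (n - i%:Z)) / (\prod_(i < m) qint (i.+1)%:Z).

(* Elements of the free Q(q)-vector space on N^2 are represented by their
   coefficient functions nat * nat -> Qq (finitely supported in practice).
   Basis vector (a1,a2): *)
Definition basis2 (a : nat * nat) : nat * nat -> Qq := fun b => (b == a)%:R.

(* Defining relation of V_2 attached to a = (a1,a2) (to be used when a1 >= r):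
   sum_{0<=j<=r} (-1)^j [r;j] (a1 - j, a2 + j). *)
Definition rel2 (r : nat) (a : nat * nat) : nat * nat -> Qq := fun b =>
  \sum_(j < r.+1) (-1) ^+ j * qbinom r%:Z j * basis2 (a.1 - j, a.2 + j)%N b.

(* x (given by coefficients) is zero in V_2, i.e. lies in the span of the
   relations rel2 r a with a.1 >= r. *)
Definition zero_in_V2 (r : nat) (x : nat * nat -> Qq) : Prop :=
  exists s : seq (Qq * (nat * nat)),
    all (fun p => (r <= p.2.1)%N) s /\
    forall b, x b = \sum_(p <- s) p.1 * rel2 r p.2 b.

(* Main.v *)
Require Import Defs.
From HB Require Import structures.
From mathcomp Require Import all_boot all_order all_algebra.
From mathcomp Require Import ring lra zify.
Import Order.TTheory GRing.Theory Num.Theory.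
Local Open Scope ring_scope.

Lemma qXn (n : nat) : q ^+ n = tofrac ('X^n : {poly rat}) :> {fraction {poly rat}}.
Proof. by rewrite /q tofracXn. Qed.

Lemma q_neq0 : q != 0.
Proof. rewrite /q. rewrite tofrac_eq0. by rewrite polyX_eq0. Qed.

Lemma qint_nat (n : nat) : qint n%:Z = (q ^+ n - (q ^+ n)^-1) / (q - q^-1).
Proof. by rewrite /qint -exprnN exprnP. Qed.

Lemma qpow_neq1 (n : nat) : (0 < n)%N -> q ^+ n != 1.
Proof.
move=> n0; rewrite qXn -(tofrac1 _) tofrac_eq.
apply/negP => /eqP /(congr1 (fun p : {poly rat} => size p)) /=; rewrite size_polyXn size_poly1. lia.
Qed.

Lemma qint_neq0 (n : nat) : (0 < n)%N -> qint n%:Z != 0.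
Proof.
move=> n0; rewrite qint_nat mulf_neq0 ?invr_eq0 //.
  rewrite subr_eq0; apply/negP => /eqP H.
  have : q ^+ (n + n) == 1.
    rewrite exprD {1}H mulVf //. apply: expf_neq0; exact: q_neq0.
  rewrite (negbTE (@qpow_neq1 (n + n) _)) //; lia.
rewrite subr_eq0; apply/negP => /eqP H.
have : q ^+ 2 == 1 by rewrite expr2 {1}H mulVf // q_neq0.
by rewrite (negbTE (@qpow_neq1 2 _)).
Qed.

Definition qfact (n : nat) : Qq := \prod_(i < n) qint (i.+1)%:Z.

Lemma qfactS n : qfact n.+1 = qfact n * qint n.+1%:Z.
Proof. by rewrite /qfact big_ord_recr. Qed.

Lemma qfact_neq0 n : qfact n != 0.
Proof. by rewrite /qfact; apply/prodf_neq0 => i _; apply: qint_neq0. Qed.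

Lemma qnum n m : (m <= n)%N ->
  (\prod_(i < m) qint (n%:Z - i%:Z)) * qfact (n - m) = qfact n.
Proof.
elim: m => [|m IH] mn; first by rewrite big_ord0 mul1r subn0.
rewrite big_ord_recr /= -(IH (ltnW mn)).
have -> : (n - m = (n - m.+1).+1)%N by lia.
rewrite qfactS subzn; last by lia.
have -> : (n - m = (n - m.+1).+1)%N by lia.
by rewrite -mulrA (mulrC (qint _)).
Qed.

Lemma qbinomE n m p : n = (m + p)%N ->
  qbinom n%:Z m = qfact n / (qfact m * qfact p).
Proof.
move=> ->; rewrite -(@qnum (m + p) m (leq_addr p m)).
have -> : (m + p - m = p)%N by lia.
rewrite [qfact m * _]mulrC invfM mulrA mulfK //; exact: qfact_neq0.
Qed.

Lemma qid_gen (F : fieldType) (Q x y z : F) :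
  Q != 0 -> x != 0 -> y != 0 -> z != 0 -> Q * Q - 1 != 0 ->
  (x - x^-1) / (Q - Q^-1) * ((((x * y) * z) - ((x * y) * z)^-1) / (Q - Q^-1))
  + (z - z^-1) / (Q - Q^-1) * ((y - y^-1) / (Q - Q^-1))
  = (x * y - (x * y)^-1) / (Q - Q^-1) * ((x * z - (x * z)^-1) / (Q - Q^-1)).
Proof. move=> *. field. by do ?(apply/andP; split). Qed.

Lemma qid (s t u : nat) :
  qint s%:Z * qint (s + t + u)%N%:Z + qint u%:Z * qint t%:Z
  = qint (s + t)%N%:Z * qint (s + u)%N%:Z.
Proof.
have qn := q_neq0.
have Q1 : q * q - 1 != 0 by rewrite -expr2 subr_eq0 qpow_neq1.
have := @qid_gen _ q (q ^+ s) (q ^+ t) (q ^+ u) qn (expf_neq0 _ qn)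
  (expf_neq0 _ qn) (expf_neq0 _ qn) Q1.
rewrite -!exprD !qint_nat.
move=> H. Time exact H.
Qed.

Lemma key_gen (F : fieldType) (B1 B2 B3 B4 B5 B6 Fa Fa1 Fk Fk1 Fb Fb1 Fak1 Fak2
  Fabk2 Fabk3 Fab1 Fab2 ia1 ik1 ib1 iak2 iabk3 iab2 : F) :
  Fa != 0 -> Fk != 0 -> Fb != 0 -> Fak1 != 0 -> Fab1 != 0 ->
  ia1 != 0 -> ik1 != 0 -> ib1 != 0 -> iak2 != 0 ->
  Fa1 = Fa * ia1 -> Fk1 = Fk * ik1 -> Fb1 = Fb * ib1 -> Fak2 = Fak1 * iak2 ->
  Fabk3 = Fabk2 * iabk3 -> Fab2 = Fab1 * iab2 ->
  B1 = Fak1 / (Fa * Fk1) -> B2 = Fabk3 / (Fb1 * Fak2) ->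
  B3 = Fak1 / (Fa1 * Fk) -> B4 = Fabk2 / (Fb * Fak2) ->
  B5 = Fabk2 / (Fab1 * Fk1) -> B6 = Fab2 / (Fa1 * Fb1) ->
  ia1 * iabk3 + ik1 * ib1 = iab2 * iak2 ->
  B1 * B2 = - (B3 * B4) + B5 * B6.
Proof.
move=> h1 h2 h3 h4 h5 h6 h7 h8 h9 -> -> -> -> -> -> -> -> -> -> -> -> H.
have E : iabk3 = (iab2 * iak2 - ik1 * ib1) / ia1.
  by rewrite -H addrK mulrC mulKf.
rewrite E. field. by rewrite h1 h2 h3 h4 h5 h6 h7 h8 h9.
Qed.

Lemma coef_step (a b k : nat) :
  qbinom (a + k).+1%:Z a * qbinom (a + b + k).+3%:Z b.+1
  = - (qbinom (a + k).+1%:Z a.+1 * qbinom (a + b + k).+2%:Z b)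
    + qbinom (a + b + k).+2%:Z (a + b).+1 * qbinom (a + b).+2%:Z a.+1.
Proof.
apply: (@key_gen _ _ _ _ _ _ _ (qfact a) (qfact a.+1) (qfact k) (qfact k.+1)
  (qfact b) (qfact b.+1) (qfact (a + k).+1) (qfact (a + k).+2)
  (qfact (a + b + k).+2) (qfact (a + b + k).+3) (qfact (a + b).+1)
  (qfact (a + b).+2) (qint a.+1%:Z) (qint k.+1%:Z) (qint b.+1%:Z)
  (qint (a + k).+2%:Z) (qint (a + b + k).+3%:Z) (qint (a + b).+2%:Z));
  rewrite ?qfact_neq0 ?qint_neq0 //; try exact: qfactS;
  try (apply: qbinomE; lia).
have := qid a.+1 b.+1 k.+1.
have -> : (a.+1 + b.+1 + k.+1 = (a + b + k).+3)%N by lia.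
have -> : (a.+1 + b.+1 = (a + b).+2)%N by lia.
have -> : (a.+1 + k.+1 = (a + k).+2)%N by lia.
by [].
Qed.

Lemma Z_ext r (x y : nat * nat -> Qq) :
  (forall b, x b = y b) -> zero_in_V2 r x -> zero_in_V2 r y.
Proof. move=> E [s [h1 h2]]; exists s; split=> // b; by rewrite -E. Qed.

Lemma Z_add r (x y : nat * nat -> Qq) :
  zero_in_V2 r x -> zero_in_V2 r y -> zero_in_V2 r (fun b => x b + y b).
Proof.
move=> [s [h1 h2]] [t [h3 h4]]; exists (s ++ t); split.
  by rewrite all_cat h1 h3.
by move=> b; rewrite big_cat /= h2 h4.
Qed.

Lemma Z_scale r c (x : nat * nat -> Qq) :
  zero_in_V2 r x -> zero_in_V2 r (fun b => c * x b).
Proof.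
move=> [s [h1 h2]]; exists [seq (c * p.1, p.2) | p <- s]; split.
  by rewrite all_map.
by move=> b; rewrite big_map h2 mulr_sumr; apply: eq_bigr => p _; rewrite mulrA.
Qed.

Lemma Z_rel r a : (r <= a.1)%N -> zero_in_V2 r (rel2 r a).
Proof.
move=> h; exists [:: (1, a)]; split; first by rewrite /= h.
by move=> b; rewrite big_seq1 mul1r.
Qed.

Definition shx (x : nat * nat -> Qq) (b : nat * nat) : Qq :=
  if b.1 is n.+1 then x (n, b.2) else 0.

Lemma shx_rel r a b : (r <= a.1)%N ->
  shx (rel2 r a) b = rel2 r (a.1.+1, a.2) b.
Proof.
move=> h; case: b => [[|n] b2]; rewrite /shx /rel2 /=.
  rewrite big1 // => j _; rewrite /basis2 xpair_eqE.
  have -> : (0 == a.1.+1 - j)%N = false.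
    by apply/negbTE; have := ltn_ord j; lia.
  by rewrite mulr0.
apply: eq_bigr => j _; rewrite /basis2 !xpair_eqE /=.
have -> : (a.1.+1 - j = (a.1 - j).+1)%N by have := ltn_ord j; lia.
by rewrite eqSS.
Qed.

Lemma Z_shx r x : zero_in_V2 r x -> zero_in_V2 r (shx x).
Proof.
move=> [s [h1 h2]]; exists [seq (p.1, (p.2.1.+1, p.2.2)) | p <- s]; split.
  rewrite all_map; apply/allP => p ps /=; have := allP h1 p ps => /=; lia.
move=> b; rewrite big_map.
have -> : shx x b = \sum_(p <- s) p.1 * shx (rel2 r p.2) b.
  case: b => [[|n] b2]; rewrite /shx /=; last by rewrite h2.
  by rewrite big1 // => p _; rewrite mulr0.
rewrite big_seq [RHS]big_seq; apply: eq_bigr => p ps.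
by rewrite shx_rel //; apply: (allP h1 p ps).
Qed.

Lemma qbinom0 n : qbinom n 0 = 1.
Proof. by rewrite /qbinom !big_ord0 divr1. Qed.

Lemma qbinom_nn n : qbinom n%:Z n = 1.
Proof.
rewrite (@qbinomE n n 0) ?addn0 //.
by rewrite /qfact big_ord0 mulr1 divff // qfact_neq0.
Qed.

Lemma qbinom_sym n m : (m <= n)%N -> qbinom n%:Z (n - m) = qbinom n%:Z m.
Proof.
move=> h; rewrite (@qbinomE n (n - m) m) ?(@qbinomE n m (n - m)); try lia.
by rewrite [qfact (n - m) * _]mulrC.
Qed.

Definition cc (r k s : nat) : Qq :=
  (-1) ^+ (s - 1) * qbinom (s + k - 1)%N%:Z (s - 1) * qbinom (r + k)%N%:Z (r - s).

Definition FF (r k l : nat) (b : nat * nat) : Qq :=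
  basis2 (r + k, l)%N b -
    \sum_(1 <= s < r.+1) cc r k s * basis2 (r - s, l + s + k)%N b.

Lemma FF_ord r k l b : FF r k l b =
  basis2 (r + k, l)%N b - \sum_(i < r) cc r k i.+1 * basis2 (r - i.+1, l + i.+1 + k)%N b.
Proof. by rewrite /FF big_add1 /= big_mkord. Qed.

Lemma base r l b : FF r 0 l b = rel2 r (r, l) b.
Proof.
rewrite FF_ord /rel2 big_ord_recl /= expr0 qbinom0 !mul1r subn0 !addn0.
rewrite -sumrN; congr (_ + _); apply: eq_bigr => i _.
have -> : bump 0 i = i.+1 by [].
rewrite /cc !addn0 subn1 /= qbinom_nn qbinom_sym ?exprS; last exact: ltn_ord.
by rewrite mulr1 !mulN1r !mulNr.
Qed.

Lemma sign_gen (F : comRingType) (s B1 B2 B3 B4 B5 B6 : F) :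
  B1 * B2 = - (B3 * B4) + B5 * B6 ->
  s * B1 * B2 = (- s) * B3 * B4 - B5 * ((- s) * B6).
Proof. move=> H; rewrite -!mulrA H; ring. Qed.

Lemma coef_mid m k i : (i < m)%N ->
  cc m.+1 k.+1 i.+1 = cc m.+1 k i.+2 - cc m.+1 k 1 * ((-1) ^+ i.+1 * qbinom m.+1%:Z i.+1).
Proof.
move=> im; have [b ->] : exists b, m = (i + b).+1 by exists (m - i.+1)%N; lia.
rewrite /cc.
have -> : (i.+1 + k.+1 - 1 = (i + k).+1)%N by lia.
have -> : (i.+1 - 1 = i)%N by lia.
have -> : ((i + b).+2 + k.+1 = (i + b + k).+3)%N by lia.
have -> : ((i + b).+2 - i.+1 = b.+1)%N by lia.
have -> : (i.+2 + k - 1 = (i + k).+1)%N by lia.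
have -> : (i.+2 - 1 = i.+1)%N by lia.
have -> : ((i + b).+2 + k = (i + b + k).+2)%N by lia.
have -> : ((i + b).+2 - i.+2 = b)%N by lia.
have -> : (1 + k - 1 = k)%N by lia.
have -> : (1 - 1 = 0)%N by lia.
have -> : ((i + b).+2 - 1 = (i + b).+1)%N by lia.
rewrite qbinom0 expr0 !mul1r exprS mulN1r.
exact: sign_gen (coef_step i b k).
Qed.

Lemma coef_last m k :
  cc m.+1 k.+1 m.+1 = - (cc m.+1 k 1 * ((-1) ^+ m.+1 * qbinom m.+1%:Z m.+1)).
Proof.
rewrite /cc qbinom_nn subnn qbinom0.
have -> : (m.+1 + k.+1 - 1 = (m + k).+1)%N by lia.
have -> : (1 + k - 1 = k)%N by lia.
have -> : (m.+1 + k = (m + k).+1)%N by lia.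
rewrite subn1 /= subnn qbinom0 expr0 exprS !mul1r !mulr1 mulN1r mulrN opprK.
by rewrite mulrC.
Qed.

Lemma basis2_0 x y z : basis2 (x.+1, y) (0, z)%N = 0.
Proof. by rewrite /basis2 xpair_eqE. Qed.

Lemma basis2_S x y n z : basis2 (x.+1, y) (n.+1, z)%N = basis2 (x, y) (n, z).
Proof. by rewrite /basis2 !xpair_eqE eqSS. Qed.

Lemma shx_FF r k l b : shx (FF r k l) b =
  basis2 (r + k.+1, l)%N b -
  \sum_(i < r) cc r k i.+1 * basis2 ((r - i.+1).+1, l + i.+1 + k)%N b.
Proof.
case: b => [[|n] z]; rewrite /shx /= addnS.
  by rewrite basis2_0 big1 ?subr0 // => i _; rewrite basis2_0 mulr0.
rewrite basis2_S FF_ord; congr (_ - _); apply: eq_bigr => i _; by rewrite basis2_S.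
Qed.

Lemma step m k l b :
  shx (FF m.+1 k l) b + cc m.+1 k 1 * rel2 m.+1 (m.+1, (l + k).+1)%N b
  = FF m.+1 k.+1 l b.
Proof.
rewrite shx_FF FF_ord /rel2.
rewrite (big_ord_recl m) (big_ord_recl m.+1) (big_ord_recr m) (big_ord_recr m) /=.
rewrite [X in _ = _ - (X + _)](eq_bigr (fun i : 'I_m =>
  cc m.+1 k (bump 0 i).+1 * basis2 ((m.+1 - (bump 0 i).+1).+1, (l + (bump 0 i).+1 + k)%N) b
  - cc m.+1 k 1 * ((-1) ^+ bump 0 i * qbinom m.+1 (bump 0 i) *
       basis2 ((m.+1 - bump 0 i)%N, ((l + k).+1 + bump 0 i)%N) b))); last first.
  move=> i _; have -> : bump 0 i = i.+1 by [].
  rewrite (@coef_mid m k i (ltn_ord i)).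
  have -> : ((m.+1 - i.+2).+1 = m.+1 - i.+1)%N by have := ltn_ord i; lia.
  have -> : (l + i.+2 + k = l + i.+1 + k.+1)%N by lia.
  have -> : ((l + k).+1 + i.+1 = l + i.+1 + k.+1)%N by lia.
  by rewrite mulrBl !mulrA.
rewrite sumrB -mulr_sumr coef_last.
have -> : bump 0 m = m.+1 by [].
have -> : ((l + k).+1 + m.+1 = l + m.+1 + k.+1)%N by lia.
have -> : ((m.+1 - 1).+1 = m.+1 - 0)%N by lia.
have -> : (l + 1 + k = (l + k).+1 + 0)%N by lia.
rewrite expr0 qbinom0 !mul1r.
Time ring.
Qed.

Lemma mainZ m k l : zero_in_V2 m.+1 (FF m.+1 k l).
Proof.
elim: k l => [|k IH] l.
  apply: (@Z_ext _ (rel2 m.+1 (m.+1, l))); first by move=> b; rewrite base.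
  by apply: Z_rel.
apply: (@Z_ext _ _ _ (step m k l)); apply: Z_add; first exact: Z_shx.
by apply: Z_scale; apply: Z_rel.
Qed.

Theorem proposition5p4 (r : nat) (hr : (2 <= r)%N) (k l : nat) :
  zero_in_V2 r (fun b =>
    basis2 (r + k, l)%N b -
    \sum_(1 <= s < r.+1)
      (-1) ^+ (s - 1) * qbinom (s + k - 1)%N%:Z (s - 1)
        * qbinom (r + k)%N%:Z (r - s) * basis2 (r - s, l + s + k)%N b).
Proof.
case: r hr => [|m] // _.
exact: (mainZ m k l).
Qed.
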